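(* Let $\Delta\ge3$. Then $\bar{\mathrm{R}}(\mathrm{R}(\Pi^{\mathsf{orcx}}))=\Pi^{\mathsf{orcx}}$ up to renaming of labels.
   Context: Node-edge-checkable problems $(\Sigma,\mathcal{N},\mathcal{E})$ have a finite label set $\Sigma$, node constraint $\mathcal{N}$ (a set of cardinality-$\Delta$ multisets over $\Sigma$) and edge constraint $\mathcal{E}$ (a set of cardinality-$2$ multisets). Round elimination. $\mathrm{R}(\Pi)$ is defined as follows. - $\mathcal{E}_{\mathrm{R}(\Pi)}$ consists of the configurations $S_1S_2$ of nonempty subsets of $\Sigma_\Pi$ with $L_1L_2\in\mathcal{E}_\Pi$ for all $L_i\in S_i$ that are maximal. Maximal means no other such configuration dominates it via elementwise inclusion up to permutation. - $\Sigma_{\mathrm{R}(\Pi)}$ is the set of sets occurring there. - $\mathcal{N}_{\mathrm{R}(\Pi)}$ consists of the configurations over $\Sigma_{\mathrm{R}(\Pi)}$ admitting a choice in $\mathcal{N}_\Pi$. $\bar{\mathrm{R}}(\Pi)$ is defined dually. - $\mathcal{N}_{\bar{\mathrm{R}}(\Pi)}$ consists of the maximal configurations of nonempty subsets all of whose choices lie in $\mathcal{N}_\Pi$. - $\Sigma_{\bar{\mathrm{R}}(\Pi)}$ is the set of sets occurring there. - $\mathcal{E}_{\bar{\mathrm{R}}(\Pi)}$ consists of the configurations admitting a choice in $\mathcal{E}_\Pi$. $\Pi^{\mathsf{orcx}}$ has labels $\Sigma_1\cup\Sigma_2$ with $\Sigma_1=\{\mathsf O,\mathsf R,\mathsf C,\mathsf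 X\}$ and $\Sigma_2=\{\mathsf o,\mathsf r,\mathsf c,\mathsf x\}$. Its node configurations are the $L_1\dots L_\Delta$ such that: - exactly one $L_k$ lies in $\Sigma_1$; and - there are distinct $k,k'$ with all other $L_{k''}\in\{\mathsf O,\mathsf o\}$, and either ($L_k\in\{\mathsf X,\mathsf x\}$ and $L_{k'}\in\{\mathsf O,\mathsf o\}$) or ($L_k\in\{\mathsf R,\mathsf r\}$ and $L_{k'}\in\{\mathsf C,\mathsf c\}$). Its edge configurations are all configurations in $[\mathsf O]\,[\mathsf O\mathsf R\mathsf C\mathsf X]$, $[\mathsf O\mathsf R]\,[\mathsf O\mathsf R]$, $[\mathsf O\mathsf C]\,[\mathsf O\mathsf C]$, $[\mathsf o]\,[\mathsf o\mathsf r\mathsf c\mathsf x]$ and $[\mathsf o\mathsf r]\,[\mathsf o\mathsf c]$, where $[S]\,[S']$ denotes all pairs with one entry from $S$ and the other from $S'$. *)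

(* Defs.v *)
From HB Require Import structures.
From mathcomp Require Import all_boot.

Set Implicit Arguments.
Unset Strict Implicit.
Unset Printing Implicit Defensive.

(* A node-edge-checkable problem with labels in a carrier type T.
   [plab] is the label set Sigma; configurations (multisets) are represented
   by sequences, all constraints below being invariant under permutation.
   [pnode] is the node constraint (configurations of cardinality Delta),
   [pedge] the edge constraint (configurations of cardinality 2). *)
Record problem (T : Type) := Problem {
  plab  : T -> Prop;
  pnode : seq T -> Prop;
  pedge : seq T -> Prop }.

Section RoundElimination.
Variable T : finType.

Definition nonempty_subset_of (lab : T -> Prop) (S : {set T}) : Prop :=
  S != set0 /\ forall x, x \in S -> lab x.

Definition choice_of (s : seq T) (C : seq {set T}) : bool :=
  all2 (fun (x : T) (S : {set T}) => x \in S) s C.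

Definition all_choices (P : seq T -> Prop) (C : seq {set T}) : Prop :=
  forall s, choice_of s C -> P s.

Definition some_choice (P : seq T -> Prop) (C : seq {set T}) : Prop :=
  exists s, choice_of s C /\ P s.

Definition dominated (C C' : seq {set T}) : Prop :=
  exists s, perm_eq s C' /\ all2 (fun A B : {set T} => A \subset B) C s.

Definition admissible (n : nat) (lab : T -> Prop) (P : seq T -> Prop)
    (C : seq {set T}) : Prop :=
  size C = n /\ (forall S, S \in C -> nonempty_subset_of lab S) /\ all_choices P C.

Definition maximal_admissible n lab P (C : seq {set T}) : Prop :=
  admissible n lab P C /\
  forall C', admissible n lab P C' -> dominated C C' -> perm_eq C C'.

Definition over (lab : {set T} -> Prop) (C : seq {set T}) : Prop :=
  forall S, S \in C -> lab S.

Definition RE (Delta : nat) (Pi : problem T) : problem {set T} :=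
  let E := maximal_admissible 2 (plab Pi) (pedge Pi) in
  let L := fun S => exists C, E C /\ S \in C in
  Problem L (fun C => size C = Delta /\ over L C /\ some_choice (pnode Pi) C) E.

Definition REbar (Delta : nat) (Pi : problem T) : problem {set T} :=
  let N := maximal_admissible Delta (plab Pi) (pnode Pi) in
  let L := fun S => exists C, N C /\ S \in C in
  Problem L N (fun C => size C = 2 /\ over L C /\ some_choice (pedge Pi) C).

End RoundElimination.

(* Equality of problems up to renaming of labels: a bijection between the
   label sets that maps the node (resp. edge) constraint exactly onto the
   node (resp. edge) constraint; constraints only use labels of the set. *)
Definition iso_problem (T1 T2 : eqType) (P1 : problem T1) (P2 : problem T2) : Prop :=
  exists (f : T1 -> T2) (g : T2 -> T1),
    (forall a, plab P1 a -> plab P2 (f a)) /\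
    (forall b, plab P2 b -> plab P1 (g b)) /\
    (forall a, plab P1 a -> g (f a) = a) /\
    (forall b, plab P2 b -> f (g b) = b) /\
    (forall s, pnode P1 s -> forall a, a \in s -> plab P1 a) /\
    (forall s, pedge P1 s -> forall a, a \in s -> plab P1 a) /\
    (forall t, pnode P2 t -> forall b, b \in t -> plab P2 b) /\
    (forall t, pedge P2 t -> forall b, b \in t -> plab P2 b) /\
    (forall s, (forall a, a \in s -> plab P1 a) ->
               (pnode P1 s <-> pnode P2 (map f s))) /\
    (forall s, (forall a, a \in s -> plab P1 a) ->
               (pedge P1 s <-> pedge P2 (map f s))).

(* The labels of Pi^orcx: uppercase = Sigma_1, lowercase = Sigma_2 *)
Inductive olab := LO | LR | LC | LX | Lo | Lr | Lc | Lx.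

Definition olab_to_ord (l : olab) : 'I_8 :=
  inord match l with LO => 0 | LR => 1 | LC => 2 | LX => 3
                   | Lo => 4 | Lr => 5 | Lc => 6 | Lx => 7 end.
Definition ord_to_olab (i : 'I_8) : option olab :=
  match val i with 0 => Some LO | 1 => Some LR | 2 => Some LC | 3 => Some LX
                 | 4 => Some Lo | 5 => Some Lr | 6 => Some Lc | 7 => Some Lx
                 | _ => None end.
Lemma olab_pcancel : pcancel olab_to_ord ord_to_olab.
Proof. by case; rewrite /ord_to_olab /olab_to_ord /= inordK. Qed.

HB.instance Definition _ := Finite.copy olab (pcan_type olab_pcancel).

Definition Sigma1 (l : olab) : bool := l \in [:: LO; LR; LC; LX].

Definition orcx_node (Delta : nat) (s : seq olab) : Prop :=
  size s = Delta /\
  count Sigma1 s = 1 /\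
  exists k k', [/\ k < Delta, k' < Delta, k != k',
    (forall k'', k'' < Delta -> k'' != k -> k'' != k' ->
       nth LO s k'' \in [:: LO; Lo]) &
    ((nth LO s k \in [:: LX; Lx]) && (nth LO s k' \in [:: LO; Lo])) ||
    ((nth LO s k \in [:: LR; Lr]) && (nth LO s k' \in [:: LC; Lc]))].

Definition pairs_from (S S' : seq olab) (a b : olab) : bool :=
  ((a \in S) && (b \in S')) || ((b \in S) && (a \in S')).

Definition orcx_edge_pair (a b : olab) : bool :=
  [|| pairs_from [:: LO] [:: LO; LR; LC; LX] a b,
      pairs_from [:: LO; LR] [:: LO; LR] a b,
      pairs_from [:: LO; LC] [:: LO; LC] a b,
      pairs_from [:: Lo] [:: Lo; Lr; Lc; Lx] a b |
      pairs_from [:: Lo; Lr] [:: Lo; Lc] a b].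

Definition orcx_edge (s : seq olab) : Prop :=
  exists a b, s = [:: a; b] /\ orcx_edge_pair a b.

Definition Pi_orcx (Delta : nat) : problem olab :=
  Problem (fun _ => True) (orcx_node Delta) orcx_edge.

(* Main.v *)
Require Import Defs.
From mathcomp Require Import all_boot zify.
Set Implicit Arguments.
Unset Strict Implicit.
Unset Printing Implicit Defensive.

Definition obeq (a b : olab) : bool :=
  match a, b with
  | LO, LO | LR, LR | LC, LC | LX, LX | Lo, Lo | Lr, Lr | Lc, Lc | Lx, Lx => true
  | _, _ => false end.

Lemma eq_olabE (a b : olab) : (a == b) = obeq a b.
Proof.
case: a; case: b => /=; solve [apply: eqxx | apply/negbTE/eqP; discriminate].
Qed.

Definition olabs := [:: LO; LR; LC; LX; Lo; Lr; Lc; Lx].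
Lemma mem_olabs a : a \in olabs.
Proof. by case: a; rewrite !in_cons !eq_olabE. Qed.

Definition up (a : olab) : bool :=
  match a with LO | LR | LC | LX => true | _ => false end.
Lemma Sigma1E a : Sigma1 a = up a.
Proof. by case: a; rewrite /Sigma1 !in_cons !eq_olabE. Qed.

Definition pairb (a b : olab) : bool :=
  match a, b with
  | LO, (LO|LR|LC|LX) | (LR|LC|LX), LO => true
  | LR, LR | LC, LC => true
  | Lo, (Lo|Lr|Lc|Lx) | (Lr|Lc|Lx), Lo => true
  | Lr, Lc | Lc, Lr => true
  | _, _ => false end.
Lemma pairE a b : orcx_edge_pair a b = pairb a b.
Proof.
by case: a; case: b; rewrite /orcx_edge_pair /pairs_from !in_cons ?in_nil !eq_olabE.
Qed.
Lemma pairb_sym a b : pairb a b = pairb b a.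
Proof. by case: a; case: b. Qed.

Definition rlmem (a x : olab) : bool :=
  match a with
  | LO => obeq x LO
  | LR => obeq x LO || obeq x LR
  | LC => obeq x LO || obeq x LC
  | LX => up x
  | Lo => obeq x Lo
  | Lr => obeq x Lo || obeq x Lr
  | Lc => obeq x Lo || obeq x Lc
  | Lx => ~~ up x end.
Definition rl (a : olab) : {set olab} := [set x | rlmem a x].
Definition ncn (a : olab) : olab :=
  match a with LO => LX | LX => LO | LR => LR | LC => LC
             | Lo => Lx | Lx => Lo | Lr => Lc | Lc => Lr end.
Lemma ncnK a : ncn (ncn a) = a. Proof. by case: a. Qed.

Lemma rl_self a : a \in rl a. Proof. by rewrite inE; case: a. Qed.
Lemma rl_inj : injective rl.
Proof.
move=> a b /setP E.
have H : forall x, rlmem a x = rlmem b x by move=> x; have := E x; rewrite !inE.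
have := H a; have := H b; have := H LO; have := H Lo; have := H LR; have := H LC;
have := H Lr; have := H Lc.
clear E H.
by case: a; case: b.
Qed.

Definition cnF (v : olab -> bool) (x : olab) : bool :=
  all (fun a => v a ==> pairb a x) olabs.
Definition cn (A : {set olab}) : {set olab} := [set x | cnF (fun a => a \in A) x].

Lemma in_cn (A : {set olab}) x : reflect (forall a, a \in A -> pairb a x) (x \in cn A).
Proof.
rewrite inE /cnF; apply: (iffP allP) => H a.
  by move=> aA; have := H a (mem_olabs a); rewrite aA.
by move=> _; apply/implyP; apply: H.
Qed.

Lemma cn_rl a : cn (rl a) = rl (ncn a).
Proof.
apply/setP => x; rewrite !inE /cnF /= !inE.
by case: a; case: x.
Qed.

Definition bcheck (v : olab -> bool) :=
  has v olabs ==> (all (fun x => ~~ cnF v x) olabs ||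
     has (fun b => all (fun x => cnF v x == rlmem b x) olabs) olabs).
Lemma bits_check : forall b1 b2 b3 b4 b5 b6 b7 b8 : bool,
  bcheck (fun x => match x with LO => b1 | LR => b2 | LC => b3 | LX => b4
                     | Lo => b5 | Lr => b6 | Lc => b7 | Lx => b8 end).
Proof. by do 8 case. Qed.

Lemma cn_class (B : {set olab}) : B != set0 -> cn B = set0 \/ exists b, cn B = rl b.
Proof.
move=> B0.
pose v := fun x => match x with LO => LO \in B | LR => LR \in B | LC => LC \in B
   | LX => LX \in B | Lo => Lo \in B | Lr => Lr \in B | Lc => Lc \in B | Lx => Lx \in B end.
have ev : forall x, v x = (x \in B) by case.
have ecn : forall x, cnF v x = (x \in cn B).
  by move=> x; rewrite inE /cnF; apply: eq_all => a; rewrite ev.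
have := bits_check (LO \in B) (LR \in B) (LC \in B) (LX \in B) (Lo \in B) (Lr \in B) (Lc \in B) (Lx \in B).
move=> H; have {H}H : bcheck v := H; move: H; rewrite /bcheck.
have -> : has v olabs.
  case/set0Pn: B0 => x xB; apply/hasP; exists x; first exact: mem_olabs.
  by rewrite ev.
move=> /orP [/allP H | /hasP [b _ /allP H]].
  left; apply/setP => x; rewrite in_set0 -ecn.
  by apply/negbTE/H/mem_olabs.
right; exists b; apply/setP => x; rewrite [x \in rl b]inE -ecn.
by apply/eqP/H/mem_olabs.
Qed.

Definition ER (C : seq {set olab}) : Prop :=
  maximal_admissible 2 (fun _ : olab => True) orcx_edge C.

Lemma adm2P C : admissible 2 (fun _ : olab => True) orcx_edge C <->
  exists A B, C = [:: A; B] /\ A != set0 /\ B != set0 /\ B \subset cn A.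
Proof.
split.
  move=> [sz [ne ch]].
  case: C sz ne ch => [|A [|B []]] // _ ne ch.
  exists A, B; split => //.
  have [A0 _] := ne A (mem_head _ _).
  have [B0 _] : nonempty_subset_of (fun _ => True) B by apply: ne; rewrite !inE eqxx orbT.
  split => //; split => //.
  apply/subsetP => b bB; apply/in_cn => a aA.
  have := ch [:: a; b]; rewrite /choice_of /= aA bB /= => /(_ isT).
  by case=> a' [b' [[<- <-] p]]; rewrite -pairE.
move=> [A [B [-> [A0 [B0 sub]]]]].
split => //; split.
  move=> S; rewrite !inE => /orP [/eqP -> | /eqP ->]; by split.
case=> [|a [|b [|? ?]]]; rewrite /choice_of /= ?andbF // => /and3P [aA bB _].
exists a, b; split => //; rewrite pairE.
by move/subsetP: sub => /(_ b bB) /in_cn; apply.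
Qed.

Lemma perm2 (T : eqType) (a b c d : T) :
  perm_eq [:: a; b] [:: c; d] -> (a = c /\ b = d) \/ (a = d /\ b = c).
Proof.
move=> p.
have : a \in [:: c; d] by rewrite -(perm_mem p) mem_head.
rewrite !inE => /orP [/eqP ac | /eqP ad].
  subst a; left; split => //.
  move: p; rewrite perm_cons => /perm_mem /(_ b).
  by rewrite !inE eqxx => /esym /eqP.
subst a; right; split => //.
have p' : perm_eq [:: d; b] [:: d; c].
  apply: (perm_trans p); apply/permP => q /=; by rewrite !addn0 addnC.
move: p'; rewrite perm_cons => /perm_mem /(_ b).
by rewrite !inE eqxx => /esym /eqP.
Qed.

Lemma cn_sym (X Y : {set olab}) : Y \subset cn X -> X \subset cn Y.
Proof.
move/subsetP => H; apply/subsetP => x xX; apply/in_cn => y yY.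
by rewrite pairb_sym; move/in_cn: (H y yY); apply.
Qed.

Lemma cn_anti (X Y : {set olab}) : X \subset Y -> cn Y \subset cn X.
Proof.
move/subsetP => H; apply/subsetP => x /in_cn xY; apply/in_cn => y yX.
exact/xY/H.
Qed.

Lemma set0_sub (X Y : {set olab}) : X != set0 -> X \subset Y -> Y != set0.
Proof.
case/set0Pn => x xX /subsetP /(_ x xX) xY; apply/set0Pn; by exists x.
Qed.

Lemma ER_char C : ER C -> exists a, C = [:: rl a; rl (ncn a)].
Proof.
move=> [adm max].
have [A [B [EC [A0 [B0 sub]]]]] := (adm2P _).1 adm; subst C.
have eA : A = cn B.
  have P1 : admissible 2 (fun _ : olab => True) orcx_edge [:: cn B; B].
    apply/adm2P; exists (cn B), B; split; first by [].
    split; first exact: (set0_sub A0 (cn_sym sub)).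
    split; first by [].
    by apply: cn_sym; apply: subxx.
  have P2 : dominated [:: A; B] [:: cn B; B].
    exists [:: cn B; B]; split => //=.
    by rewrite (cn_sym sub) subxx.
  move: (max _ P1 P2) => /perm2 [[eA _]|[eA eB]] //.
  by rewrite eA; exact eB.
have eB : B = cn A.
  have P1 : admissible 2 (fun _ : olab => True) orcx_edge [:: A; cn A].
    apply/adm2P; exists A, (cn A); split; first by [].
    split; first by [].
    split; first exact: (set0_sub B0 sub).
    exact: subxx.
  have P2 : dominated [:: A; B] [:: A; cn A].
    exists [:: A; cn A]; split => //=.
    by rewrite sub subxx.
  move: (max _ P1 P2) => /perm2 [[_ eB]|[eA' eB]] //.
  by rewrite eB; exact: eA'.
have [E|[b Eb]] := cn_class B0.
  by move: A0; rewrite eA E eqxx.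
exists b; rewrite eB eA Eb cn_rl.
by [].
Qed.

Lemma rl_ne a : rl a != set0.
Proof. apply/set0Pn; exists a; exact: rl_self. Qed.

Lemma ER_rl a : ER [:: rl a; rl (ncn a)].
Proof.
have adm : admissible 2 (fun _ : olab => True) orcx_edge [:: rl a; rl (ncn a)].
  apply/adm2P; exists (rl a), (rl (ncn a)); split; first by [].
  split; first exact: rl_ne. split; first exact: rl_ne.
  by rewrite cn_rl subxx.
split => // C' adm' [s [ps al]].
have [c1 [c2 [EC [c10 [c20 sub]]]]] := (adm2P _).1 adm'; subst C'.
have := perm_size ps; case: s ps al => [|s1 [|s2 []]] // ps al _.
have sub' : s2 \subset cn s1.
  by case: (perm2 ps) => [[-> ->]|[-> ->]] //; apply: cn_sym.
move: al => /= /and3P [h1 h2 _].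
have e2 : s2 = rl (ncn a).
  apply/eqP; rewrite eqEsubset h2 andbT.
  by rewrite -cn_rl; apply: (subset_trans sub'); apply: cn_anti.
have e1 : s1 = rl a.
  apply/eqP; rewrite eqEsubset h1 andbT.
  have := cn_sym sub'; rewrite e2 cn_rl ncnK; by [].
by rewrite -e1 -e2.
Qed.

Definition LRl (S : {set olab}) : Prop := exists C, ER C /\ S \in C.

Lemma LR_char S : LRl S <-> exists a, S = rl a.
Proof.
split.
  move=> [C [/ER_char [a ->]]]; rewrite !inE => /orP [/eqP ->|/eqP ->].
    by exists a.
  by exists (ncn a).
move=> [a ->]; exists [:: rl a; rl (ncn a)]; split; first exact: ER_rl.
exact: mem_head.
Qed.

Lemma ER_pair a1 a2 : ER [:: rl a1; rl a2] <-> a2 = ncn a1.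
Proof.
split; last by move=> ->; exact: ER_rl.
move=> /ER_char [a [/rl_inj e1 /rl_inj e2]]; by subst.
Qed.

Definition isX a := match a with LX | Lx => true | _ => false end.
Definition isR a := match a with LR | Lr => true | _ => false end.
Definition isC a := match a with LC | Lc => true | _ => false end.
Definition isO a := match a with LO | Lo => true | _ => false end.

Lemma memXE (a : olab) : (a \in [:: LX; Lx]) = isX a.
Proof. by case: a; rewrite !in_cons in_nil !eq_olabE. Qed.
Lemma memRE (a : olab) : (a \in [:: LR; Lr]) = isR a.
Proof. by case: a; rewrite !in_cons in_nil !eq_olabE. Qed.
Lemma memCE (a : olab) : (a \in [:: LC; Lc]) = isC a.
Proof. by case: a; rewrite !in_cons in_nil !eq_olabE. Qed.
Lemma memOE (a : olab) : (a \in [:: LO; Lo]) = isO a.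
Proof. by case: a; rewrite !in_cons in_nil !eq_olabE. Qed.

Lemma memXI (a : olab) : isX a -> a \in [:: LX; Lx]. Proof. by rewrite memXE. Qed.
Lemma memRI (a : olab) : isR a -> a \in [:: LR; Lr]. Proof. by rewrite memRE. Qed.
Lemma memCI (a : olab) : isC a -> a \in [:: LC; Lc]. Proof. by rewrite memCE. Qed.
Lemma memOI (a : olab) : isO a -> a \in [:: LO; Lo]. Proof. by rewrite memOE. Qed.

Lemma all2_nthP (T S : Type) (r : T -> S -> bool) s t x0 y0 :
  reflect (size s = size t /\ forall i, i < size s -> r (nth x0 s i) (nth y0 t i))
          (all2 r s t).
Proof.
elim: s t => [|x s IH] [|y t] /=.
- by apply: ReflectT; split.
- by apply: ReflectF => [[]].
- by apply: ReflectF => [[]].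
apply: (iffP andP).
  move=> [rxy /IH [sz H]]; split; first by rewrite sz.
  by case=> [|i] //= /H.
move=> [[sz] H]; split; first exact: (H 0).
by apply/IH; split => // i /(H i.+1).
Qed.

Lemma all2_count (T S : Type) (r : T -> S -> bool) (p : pred T) (q : pred S) s t :
  all2 r s t -> (forall x y, r x y -> p x = q y) -> count p s = count q t.
Proof.
move=> H E; elim: s t H => [|x s IH] [|y t] //= /andP [rxy /IH ->].
by rewrite (E _ _ rxy).
Qed.

Lemma all2_size (T S : Type) (r : T -> S -> bool) s t : all2 r s t -> size s = size t.
Proof. by elim: s t => [|x s IH] [|y t] //= /andP [_ /IH ->]. Qed.

Definition NRw D w := (size w == D) && (count up w == 1) && (has isX w || has isR w && has isC w).
Definition NR D (c : seq {set olab}) := size c = D /\ Defs.over LRl c /\ some_choice (orcx_node D) c.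

Lemma rl_up x a : x \in rl a -> up x = up a.
Proof. by rewrite inE; case: a; case: x. Qed.
Lemma rl_X x a : x \in rl a -> isX x -> isX a.
Proof. by rewrite inE; case: a; case: x. Qed.
Lemma rl_R x a : x \in rl a -> isR x -> isX a || isR a.
Proof. by rewrite inE; case: a; case: x. Qed.
Lemma rl_C x a : x \in rl a -> isC x -> isX a || isC a.
Proof. by rewrite inE; case: a; case: x. Qed.

Definition base a := if up a then LO else Lo.
Lemma base_in a : base a \in rl a. Proof. by rewrite inE; case: a. Qed.
Lemma isO_base a : isO (base a). Proof. by case: a. Qed.

Definition mkt D w (K : seq nat) :=
  mkseq (fun i => if i \in K then nth LO w i else base (nth LO w i)) D.

Lemma mkt_choice D w K : size w = D -> choice_of (mkt D w K) (map rl w).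
Proof.
move=> sz; apply/(all2_nthP _ _ _ LO (rl LO)); rewrite size_mkseq size_map sz.
split => // i iD; rewrite nth_mkseq // (nth_map LO) ?sz //.
by case: ifP => _; [exact: rl_self | exact: base_in].
Qed.

Lemma choice_count t w : choice_of t (map rl w) -> count up t = count up w.
Proof.
elim: w t => [|a w IH] [|x t] //= /andP [xa /IH ->].
by rewrite (rl_up xa).
Qed.

Lemma NR_char D w : 1 < D -> NR D (map rl w) <-> NRw D w.
Proof.
move=> D2; split.
- move=> [sz [_ [t [ch [szt [cnt [k [k' [hk hk' nkk' oth cond]]]]]]]]].
  rewrite size_map in sz.
  have cu : count up w = 1 by rewrite -(choice_count ch) -(eq_count Sigma1E) cnt.
  have nthk : forall i, i < D -> nth LO t i \in rl (nth LO w i).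
    move=> i iD; move/(all2_nthP _ _ _ LO (rl LO)): ch => [_ H].
    by rewrite -(nth_map LO (rl LO)) ?sz //; apply: H; rewrite szt.
  rewrite /NRw sz eqxx cu eqxx /=.
  rewrite !memXE !memOE !memRE !memCE in cond.
  have mk : forall i, i < D -> nth LO w i \in w by move=> i iD; apply: mem_nth; rewrite sz.
  case/orP: cond => /andP [c1 c2].
    apply/orP; left; apply/hasP; exists (nth LO w k); first exact: mk.
    exact: rl_X (nthk k hk) c1.
  have := rl_R (nthk k hk) c1; have := rl_C (nthk k' hk') c2.
  move=> /orP [h2|h2] /orP [h1|h1].
  + by apply/orP; left; apply/hasP; exists (nth LO w k'); [exact: mk|].
  + by apply/orP; left; apply/hasP; exists (nth LO w k'); [exact: mk|].
  + by apply/orP; left; apply/hasP; exists (nth LO w k); [exact: mk|].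
  + apply/orP; right; apply/andP; split; apply/hasP.
      by exists (nth LO w k); [exact: mk|].
    by exists (nth LO w k'); [exact: mk|].
- move=> /andP [/andP [/eqP sz /eqP cu] hc].
  split; first by rewrite size_map.
  split.
    move=> S /mapP [a _ ->]; apply/LR_char; by exists a.
  have cntt : forall K, count Sigma1 (mkt D w K) = 1.
    by move=> K; rewrite (eq_count Sigma1E) (choice_count (mkt_choice _ sz)) cu.
  case/orP: hc => [hX | /andP [hR hC]].
    set k := find isX w.
    have hk : k < D by rewrite -sz -has_find.
    have xk : isX (nth LO w k) by apply: nth_find.
    set k' := if k == 0 then 1 else 0.
    have hk' : k' < D by rewrite /k'; case: (k == 0) => //; apply: leq_trans D2.
    have nkk' : k != k' by rewrite /k'; case: (k =P 0) => [->|/eqP].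
    exists (mkt D w [:: k]); split; first exact: mkt_choice.
    split; first by rewrite size_mkseq.
    split; first exact: cntt.
    exists k, k'; split => //.
      move=> i iD ik ik'; rewrite nth_mkseq // mem_seq1 (negbTE ik).
      exact: (memOI (isO_base (nth LO w i))).
    rewrite !nth_mkseq // !mem_seq1 eqxx eq_sym (negbTE nkk').
    apply/orP; left; apply/andP; split; [exact: memXI | exact: (memOI (isO_base (nth LO w k')))].
  set k := find isR w; set k' := find isC w.
  have hk : k < D by rewrite -sz -has_find.
  have hk' : k' < D by rewrite -sz -has_find.
  have rk : isR (nth LO w k) by apply: nth_find.
  have ck : isC (nth LO w k') by apply: nth_find.
  have nkk' : k != k'.
    by apply/eqP => e; move: rk ck; rewrite e; case: (nth LO w k').
  exists (mkt D w [:: k; k']); split; first exact: mkt_choice.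
  split; first by rewrite size_mkseq.
  split; first exact: cntt.
  exists k, k'; split => //.
    move=> i iD ik ik'; rewrite nth_mkseq // ifF; last by rewrite !inE (negbTE ik) (negbTE ik').
    exact: (memOI (isO_base (nth LO w i))).
  have k1 : k \in [:: k; k'] by rewrite inE eqxx.
  have k2 : k' \in [:: k; k'] by rewrite !inE eqxx orbT.
  rewrite !nth_mkseq // k1 k2.
  apply/orP; right; apply/andP; split; [exact: memRI | exact: memCI].
Qed.

Definition allrl (P : pred olab) (S : {set {set olab}}) :=
  all (fun a => (rl a \in S) ==> P a) olabs.
Definition upS := allrl up.
Definition lowS := allrl (fun a => ~~ up a).
Definition xrS := allrl (fun a => isX a || isR a).
Definition xcS := allrl (fun a => isX a || isC a).
Definition okS (S : {set {set olab}}) := S != set0 /\ forall y, y \in S -> exists a, y = rl a.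

Definition struct D (Ds : seq {set {set olab}}) :=
  [/\ size Ds = D, (forall S, S \in Ds -> okS S), count upS Ds = 1,
      all (fun S => upS S || lowS S) Ds & has xrS Ds && has xcS Ds].

Lemma allrlP (P : pred olab) (S : {set {set olab}}) : reflect (forall a, rl a \in S -> P a) (allrl P S).
Proof.
apply: (iffP allP) => H a.
  by move=> aS; have := H a (mem_olabs a); rewrite aS.
by move=> _; apply/implyP; apply: H.
Qed.

Lemma allrlPn (P : pred olab) (S : {set {set olab}}) : ~~ allrl P S -> exists a, rl a \in S /\ ~~ P a.
Proof.
move/allrlP => H.
case: (pickP (fun a => (rl a \in S) && ~~ P a)) => [a /andP [h1 h2]|no].
  by exists a.
exfalso; apply: H => a aS; apply/negPn; have := no a; rewrite aS /=; by move=> ->.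
Qed.

Definition dec (y : {set olab}) : olab := odflt LO [pick a | y == rl a].
Lemma dec_rl a : dec (rl a) = a.
Proof.
rewrite /dec; case: pickP => [b /eqP /rl_inj -> //|no].
by have := no a; rewrite eqxx.
Qed.

Lemma choice_mem (T : finType) (c : seq T) Ds x :
  choice_of c Ds -> x \in c -> exists2 S, S \in Ds & x \in S.
Proof.
elim: c Ds => [|y c IH] [|S Ds] //= /andP [yS ch].
rewrite inE => /orP [/eqP ->|xc]; first by exists S; rewrite ?mem_head.
by have [S' h1 h2] := IH _ ch xc; exists S'; rewrite // inE h1 orbT.
Qed.

Lemma choice_mem2 (T : finType) (c : seq T) Ds S :
  choice_of c Ds -> S \in Ds -> exists2 x, x \in c & x \in S.
Proof.
elim: c Ds => [|y c IH] [|S' Ds] //= /andP [yS ch].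
rewrite inE => /orP [/eqP ->|xc]; first by exists y; rewrite ?mem_head.
by have [x h1 h2] := IH _ ch xc; exists x; rewrite // inE h1 orbT.
Qed.

Lemma choice_map (T : finType) (f : {set T} -> T) Ds :
  (forall S, S \in Ds -> f S \in S) -> choice_of (map f Ds) Ds.
Proof.
elim: Ds => [|S Ds IH] //= H; rewrite H ?mem_head //=.
by apply: IH => S' h; apply: H; rewrite inE h orbT.
Qed.

Lemma all2_count_in (T S : eqType) (r : T -> S -> bool) (p : pred T) (q : pred S) s t :
  all2 r s t -> (forall x y, y \in t -> r x y -> p x = q y) -> count p s = count q t.
Proof.
elim: s t => [|x s IH] [|y t] //= /andP [rxy H] E.
rewrite (E _ _ (mem_head _ _) rxy) (IH t H) // => x' y' yt; apply: E.
by rewrite inE yt orbT.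
Qed.

Lemma count_sub_eq (T : eqType) (p q : pred T) s :
  (forall x, x \in s -> p x -> q x) -> count p s = count q s ->
  forall x, x \in s -> q x -> p x.
Proof.
elim: s => [|y s IH] //= H E x.
have Hs : forall x, x \in s -> p x -> q x by move=> z zs; apply: H; rewrite inE zs orbT.
have le : count p s <= count q s.
  elim: s {IH E H} Hs => [|z s IH'] //= H'.
  rewrite leq_add //; last by apply: IH' => u us; apply: H'; rewrite inE us orbT.
  by case pz: (p z) => //=; rewrite (H' z) ?mem_head.
case py: (p y); case qy: (q y); move: E; rewrite py qy /=.
- move=> E; rewrite inE => /orP [/eqP ->|xs] //; apply: IH => //; lia.
- by have := H y (mem_head _ _); rewrite py qy => /(_ isT).
- by move=> E; exfalso; lia.
- move=> E; rewrite inE => /orP [/eqP ->|xs]; first by rewrite qy.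
  by apply: IH.
Qed.

Lemma ok_nes S : nonempty_subset_of LRl S <-> okS S.
Proof.
split.
  by move=> [S0 H]; split => // y /H /LR_char.
by move=> [S0 H]; split => // y /H /LR_char.
Qed.

Definition pka (q : pred olab) (S : {set {set olab}}) :=
  odflt (odflt LO [pick a | rl a \in S]) [pick a | (rl a \in S) && q a].

Lemma pka_spec q S : okS S ->
  rl (pka q S) \in S /\ (q (pka q S) \/ forall a, rl a \in S -> ~~ q a).
Proof.
move=> [S0 HS]; rewrite /pka.
case: (pickP (fun a => (rl a \in S) && q a)) => [a /andP [h1 h2]|no] /=.
  by split; [|left].
case: (pickP (fun a => rl a \in S)) => [a h|no'] /=.
  by split => //; right => b bS; have := no b; rewrite bS /= => ->.
exfalso; case/set0Pn: S0 => y yS; have [a ea] := HS y yS.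
by have := no' a; rewrite -ea yS.
Qed.

Lemma Adm D Ds : 1 < D -> admissible D LRl (NR D) Ds <-> struct D Ds.
Proof.
move=> D2; split.
- move=> [sz [ne ch]].
  have okD : forall S, S \in Ds -> okS S by move=> S /ne /ok_nes.
  have NRq : forall q, NRw D (map (pka q) Ds).
    move=> q; apply/(NR_char _ D2); rewrite -map_comp; apply: ch.
    apply: choice_map => S SD; have [h _] := pka_spec q (okD S SD); exact h.
  have cnt1 : count upS Ds = 1.
    have := NRq (fun a => ~~ up a) => /andP [/andP [_ /eqP cu] _].
    rewrite count_map in cu; rewrite -cu; apply: eq_in_count => S SD /=.
    have [h [h'|h']] := pka_spec (fun a => ~~ up a) (okD S SD).
      rewrite (negbTE h'); apply/negbTE/negP => /allrlP H.
      by have := H _ h; rewrite (negbTE h').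
    have -> : up (pka (fun a => ~~ up a) S) by have := h' _ h; rewrite negbK.
    by apply/allrlP => a aS; have := h' a aS; rewrite negbK.
  split => //.
  + apply/allP => S SD.
    have cnt2 : count (fun S => ~~ lowS S) Ds = 1.
      have := NRq up => /andP [/andP [_ /eqP cu] _].
      rewrite count_map in cu; rewrite -cu; apply: eq_in_count => S' SD' /=.
      have [h [h'|h']] := pka_spec up (okD S' SD').
        rewrite h'; apply/negP => /allrlP H.
        by have := H _ h; rewrite h'.
      rewrite (negbTE (h' _ h)) /=; apply/negPn/allrlP => a aS; exact: h'.
    have sub : forall S', S' \in Ds -> upS S' -> ~~ lowS S'.
      move=> S' SD' /allrlP u; apply/negP => /allrlP l.
      have [S0 HS] := okD S' SD'; case/set0Pn: S0 => y yS; have [a ea] := HS y yS.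
      by rewrite ea in yS; have := l a yS; rewrite (u a yS).
    case lS : (lowS S); first by rewrite orbT.
    rewrite (count_sub_eq sub) //; first by rewrite cnt1 cnt2.
    by rewrite lS.
  + apply/andP; split.
      apply/negPn/negP => nh.
      have := NRq (fun a => ~~ (isX a || isR a)) => /andP [_ hc].
      have Hq : forall S, S \in Ds -> ~~ (isX (pka (fun a => ~~ (isX a || isR a)) S) || isR (pka (fun a => ~~ (isX a || isR a)) S)).
        move=> S SD; have [h [h'|h']] := pka_spec (fun a => ~~ (isX a || isR a)) (okD S SD) => //.
        have [a [aS na]] : exists a, rl a \in S /\ ~~ (isX a || isR a).
          apply: allrlPn; apply: contra nh => xr; apply/hasP; by exists S.
        by have := h' a aS; rewrite na.
      move: hc; have -> : has isX (map (pka (fun a => ~~ (isX a || isR a))) Ds) = false.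
        apply/negbTE/hasPn => a /mapP [S SD ->]; have := Hq S SD; by case/norP.
      have -> : has isR (map (pka (fun a => ~~ (isX a || isR a))) Ds) = false.
        apply/negbTE/hasPn => a /mapP [S SD ->]; have := Hq S SD; by case/norP.
      by [].
    apply/negPn/negP => nh.
    have := NRq (fun a => ~~ (isX a || isC a)) => /andP [_ hc].
    have Hq : forall S, S \in Ds -> ~~ (isX (pka (fun a => ~~ (isX a || isC a)) S) || isC (pka (fun a => ~~ (isX a || isC a)) S)).
      move=> S SD; have [h [h'|h']] := pka_spec (fun a => ~~ (isX a || isC a)) (okD S SD) => //.
      have [a [aS na]] : exists a, rl a \in S /\ ~~ (isX a || isC a).
        apply: allrlPn; apply: contra nh => xr; apply/hasP; by exists S.
      by have := h' a aS; rewrite na.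
    move: hc; have -> : has isX (map (pka (fun a => ~~ (isX a || isC a))) Ds) = false.
      apply/negbTE/hasPn => a /mapP [S SD ->]; have := Hq S SD; by case/norP.
    have -> : has isC (map (pka (fun a => ~~ (isX a || isC a))) Ds) = false.
      apply/negbTE/hasPn => a /mapP [S SD ->]; have := Hq S SD; by case/norP.
    by rewrite andbF.
- move=> [sz okD cu ul /andP [hr hc]].
  split => //; split; first by move=> S SD; apply/ok_nes; exact: okD.
  move=> c ch.
  have ec : c = map rl (map dec c).
    apply/esym; rewrite -map_comp; apply: map_id_in => x xc /=.
    have [S SD xS] := choice_mem ch xc; have [_ HS] := okD S SD.
    by have [a ->] := HS x xS; rewrite dec_rl.
  rewrite ec; apply/(NR_char _ D2).
  rewrite /NRw size_map (all2_size ch) sz eqxx /=.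
  have -> : count up (map dec c) = count upS Ds.
    rewrite count_map; apply: (all2_count_in ch) => x S SD xS /=.
    have [S0 HS] := okD S SD; have [a ea] := HS x xS; subst x; rewrite dec_rl.
    case/orP: (allP ul S SD) => [u|l].
      by rewrite u; move/allrlP: u => /(_ a xS).
    have ua : ~~ up a by move/allrlP: l => /(_ a xS).
    rewrite (negbTE ua); apply/esym/negbTE/negP => /allrlP H.
    by rewrite (H a xS) in ua.
  rewrite cu eqxx /=.
  have [S SD xr] := hasP hr; have [x xc xS] := choice_mem2 ch SD.
  have [a ea] := (okD S SD).2 x xS; subst x.
  have ha : isX a || isR a by move/allrlP: xr => /(_ a xS).
  have aw : a \in map dec c by apply/mapP; exists (rl a) => //; rewrite dec_rl.
  have [S' SD' xc'] := hasP hc; have [y yc yS] := choice_mem2 ch SD'.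
  have [b eb] := (okD S' SD').2 y yS; subst y.
  have hb : isX b || isC b by move/allrlP: xc' => /(_ b yS).
  have bw : b \in map dec c by apply/mapP; exists (rl b) => //; rewrite dec_rl.
  case/orP: ha => [xa|ra]; first by apply/orP; left; apply/hasP; exists a.
  case/orP: hb => [xb|cb]; first by apply/orP; left; apply/hasP; exists b.
  by apply/orP; right; apply/andP; split; apply/hasP; [exists a | exists b].
Qed.

Definition gmem (b a : olab) : bool :=
  match b with
  | LO => up a | LX => obeq a LX | LR => obeq a LR || obeq a LX | LC => obeq a LC || obeq a LX
  | Lo => ~~ up a | Lx => obeq a Lx | Lr => obeq a Lr || obeq a Lx | Lc => obeq a Lc || obeq a Lx
  end.
Definition gset (b : olab) : {set olab} := [set a | gmem b a].
Definition g (b : olab) : {set {set olab}} := rl @: gset b.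

Lemma mem_g a b : (rl a \in g b) = gmem b a.
Proof. by rewrite /g mem_imset ?inE //; exact: rl_inj. Qed.

Lemma allrl_g P b : allrl P (g b) = all (fun a => gmem b a ==> P a) olabs.
Proof. by apply: eq_all => a; rewrite mem_g. Qed.

Lemma upS_g b : upS (g b) = up b. Proof. by rewrite /upS allrl_g; case: b. Qed.
Lemma lowS_g b : lowS (g b) = ~~ up b. Proof. by rewrite /lowS allrl_g; case: b. Qed.
Lemma xrS_g b : xrS (g b) = isX b || isR b. Proof. by rewrite /xrS allrl_g; case: b. Qed.
Lemma xcS_g b : xcS (g b) = isX b || isC b. Proof. by rewrite /xcS allrl_g; case: b. Qed.
Lemma gmem_self b : gmem b b. Proof. by case: b. Qed.

Lemma okS_g b : okS (g b).
Proof.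
split.
  by apply/set0Pn; exists (rl b); rewrite mem_g gmem_self.
by move=> y /imsetP [a _ ->]; exists a.
Qed.

Lemma g_inj : injective g.
Proof.
move=> b b' E.
have H : forall a, gmem b a = gmem b' a by move=> a; rewrite -!mem_g E.
have := H b; have := H b'; have := H LO; have := H Lo; have := H LR; have := H LC;
have := H Lr; have := H Lc; clear E H.
by case: b; case: b'.
Qed.

Lemma allrl_sub P (A B : {set {set olab}}) : A \subset B -> allrl P B -> allrl P A.
Proof.
move/subsetP => sub /allrlP H; apply/allrlP => a aA; apply: H; exact: sub.
Qed.

Definition low (x : olab) := match x with LO => Lo | LR => Lr | LC => Lc | LX => Lx | y => y end.
Definition cas (b : bool) x := if b then x else low x.

Lemma gkey a (uu : bool) K : up a = uu ->
  [|| obeq K LO, obeq K LX && (isX a || isR a) && (isX a || isC a),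
      obeq K LR && (isX a || isR a) | obeq K LC && (isX a || isC a)] ->
  gmem (cas uu K) a.
Proof. by case: a; case: uu; case: K. Qed.

Lemma gkey2 a b : up a = up b ->
  [|| isO b, isX b && (isX a || isR a) && (isX a || isC a),
      isR b && (isX a || isR a) | isC b && (isX a || isC a)] -> gmem b a.
Proof. by case: a; case: b. Qed.

Lemma count1_find (T : Type) (p : pred T) s x0 i :
  count p s = 1 -> i < size s -> p (nth x0 s i) -> i = find p s.
Proof.
elim: s i => [|y s IH] i //= c1.
case py: (p y) c1 => /= c1.
  have c0 : count p s = 0 by lia.
  case: i => [|i] //= isz pi; exfalso.
  have : has p s by apply/(has_nthP x0); exists i.
  by rewrite has_count c0.
case: i => [|i] /=; first by rewrite py.
by move=> isz pi; rewrite (IH i) //; lia.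
Qed.

Lemma struct_perm D Ds Ds' : perm_eq Ds Ds' -> struct D Ds -> struct D Ds'.
Proof.
move=> p [sz okD cu ul h]; split.
- by rewrite -(perm_size p).
- by move=> S; rewrite -(perm_mem p); apply: okD.
- by rewrite -(permP p).
- by rewrite -(perm_all _ p).
- by rewrite -!(perm_has _ p).
Qed.

Lemma L2 D t : orcx_node D t -> struct D (map g t).
Proof.
move=> [szt [cnt [k [k' [hk hk' nkk' oth cond]]]]].
rewrite !memXE !memOE !memRE !memCE in cond.
have mk : forall i, i < D -> nth LO t i \in t by move=> i iD; apply: mem_nth; rewrite szt.
split.
- by rewrite size_map.
- by move=> S /mapP [b _ ->]; exact: okS_g.
- by rewrite count_map -cnt (eq_count Sigma1E); apply: eq_count => b /=; rewrite upS_g.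
- by rewrite all_map; apply/allP => b _ /=; rewrite upS_g lowS_g orbN.
rewrite !has_map; case/orP: cond => /andP [c1 c2]; apply/andP; split; apply/hasP.
- by exists (nth LO t k); [exact: mk | rewrite /= xrS_g c1].
- by exists (nth LO t k); [exact: mk | rewrite /= xcS_g c1].
- by exists (nth LO t k); [exact: mk | rewrite /= xrS_g c1 orbT].
- by exists (nth LO t k'); [exact: mk | rewrite /= xcS_g c2 orbT].
Qed.

Lemma up_cas b x : up x -> up (cas b x) = b.
Proof. by case: b; case: x. Qed.
Lemma isX_cas b : isX (cas b LX). Proof. by case: b. Qed.
Lemma isR_cas b : isR (cas b LR). Proof. by case: b. Qed.
Lemma isC_cas b : isC (cas b LC). Proof. by case: b. Qed.
Lemma isO_cas b : isO (cas b LO). Proof. by case: b. Qed.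

Lemma L1 D Ds : 1 < D -> struct D Ds ->
  exists t, orcx_node D t /\ all2 (fun A B : {set {set olab}} => A \subset B) Ds (map g t).
Proof.
move=> D2 [sz okD cu ul /andP [hr hc]].
have hu' : has upS Ds by rewrite has_count cu.
set u := find upS Ds.
have hu : u < D by rewrite -sz -has_find.
have upu : upS (nth set0 Ds u) by apply: nth_find.
have lowi : forall i, i < D -> i != u -> lowS (nth set0 Ds i).
  move=> i iD iu; move/(all_nthP set0): ul => /(_ i); rewrite sz => /(_ iD) /orP [h|//].
  by rewrite (count1_find cu _ h) ?sz ?eqxx in iu.
set p := find xrS Ds; set q := find xcS Ds.
have hp : p < D by rewrite -sz -has_find.
have hq : q < D by rewrite -sz -has_find.
have xp : xrS (nth set0 Ds p) by apply: nth_find.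
have xq : xcS (nth set0 Ds q) by apply: nth_find.
pose K i := if i == p then (if p == q then LX else LR) else if i == q then LC else LO.
have upK : forall i, up (K i) by move=> i; rewrite /K; do 3 case: ifP => _ //.
pose t := mkseq (fun i => cas (i == u) (K i)) D.
have nt : forall i, i < D -> nth LO t i = cas (i == u) (K i) by move=> i iD; rewrite nth_mkseq.
exists t; split.
- split; first by rewrite size_mkseq.
  split.
    rewrite (eq_count Sigma1E) /t /mkseq count_map.
    have -> : count (preim (fun i => cas (i == u) (K i)) up) (iota 0 D) = count (pred1 u) (iota 0 D).
      by apply: eq_count => i /=; rewrite up_cas.
    by rewrite count_uniq_mem ?iota_uniq // mem_iota hu.
  case E: (p == q).
    have ep : q = p by move/eqP: E.
    set k' := if p == 0 then 1 else 0.
    have hk' : k' < D by rewrite /k'; case: (p == 0) => //; apply: leq_trans D2.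
    have nkk' : p != k' by rewrite /k'; case: (p =P 0) => [->|/eqP].
    exists p, k'; split => //.
      move=> i iD ip ik'; rewrite nt // /K (negbTE ip) ep (negbTE ip).
      apply: memOI; exact: isO_cas.
    have nk'p : (k' == p) = false by rewrite eq_sym (negbTE nkk').
    rewrite !nt // /K eqxx E nk'p ep nk'p.
    apply/orP; left; apply/andP; split; [apply: memXI; exact: isX_cas | apply: memOI; exact: isO_cas].
  have npq : p != q by rewrite E.
  exists p, q; split => //.
    move=> i iD ip iq; rewrite nt // /K (negbTE ip) (negbTE iq).
    apply: memOI; exact: isO_cas.
  have nqp : (q == p) = false by rewrite eq_sym (negbTE npq).
  rewrite !nt // /K eqxx E nqp eqxx.
  apply/orP; right; apply/andP; split; [apply: memRI; exact: isR_cas | apply: memCI; exact: isC_cas].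
- apply/(all2_nthP _ _ _ set0 (g LO)); rewrite size_map size_mkseq sz; split => // i iD.
  rewrite (nth_map LO) ?size_mkseq // nt //; apply/subsetP => y yS.
  have iDs : nth set0 Ds i \in Ds by apply: mem_nth; rewrite sz.
  have [a ea] := (okD _ iDs).2 y yS; subst y.
  rewrite mem_g; apply: gkey.
    case: (i =P u) => [eiu|/eqP iu].
      by rewrite eiu in yS; move/allrlP: upu => /(_ a yS).
    by move/allrlP: (lowi i iD iu) => /(_ a yS) /negbTE.
  have ar : i = p -> isX a || isR a.
    by move=> eip; rewrite eip in yS; move/allrlP: xp => /(_ a yS).
  have ac : i = q -> isX a || isC a.
    by move=> eiq; rewrite eiq in yS; move/allrlP: xq => /(_ a yS).
  rewrite /K; case: (i =P p) => [eip|nip].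
    case: (p =P q) => [epq|npq] /=.
      by rewrite ar // ac // eip.
    by rewrite ar.
  case: (i =P q) => [eiq|niq] /=.
    by rewrite ac.
  by [].
Qed.

Lemma L3 D t s : orcx_node D t -> struct D s ->
  all2 (fun A B : {set {set olab}} => A \subset B) (map g t) s -> s = map g t.
Proof.
move=> [szt [cnt [k [k' [hk hk' nkk' oth cond]]]]] [sz okD cu ul /andP [hr hc]] al.
rewrite !memXE !memOE !memRE !memCE in cond.
have othO : forall j, j < D -> j != k -> j != k' -> isO (nth LO t j).
  by move=> j j1 j2 j3; rewrite -memOE; apply: oth.
move/(all2_nthP _ _ _ (g LO) set0): al => [_ al].
have gs : forall i, i < D -> g (nth LO t i) \subset nth set0 s i.
  move=> i iD; rewrite -(nth_map LO (g LO)) ?szt //; apply: al; by rewrite size_map szt.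
have sD : forall i, i < D -> nth set0 s i \in s by move=> i iD; apply: mem_nth; rewrite sz.
case/(has_nthP set0): hr => p; rewrite sz => hp xp.
case/(has_nthP set0): hc => q; rewrite sz => hq xq.
have tp : isX (nth LO t p) || isR (nth LO t p) by rewrite -xrS_g; apply: allrl_sub (gs p hp) xp.
have tq : isX (nth LO t q) || isC (nth LO t q) by rewrite -xcS_g; apply: allrl_sub (gs q hq) xq.
have ptk : forall j, j < D -> ~~ isO (nth LO t j) -> j = k \/ j = k'.
  move=> j jD nO; case: (j =P k) => [|/eqP jk]; first by left.
  case: (j =P k') => [|/eqP jk']; first by right.
  by rewrite othO in nO.
have nOp : ~~ isO (nth LO t p) by move: tp; case: (nth LO t p).
have nOq : ~~ isO (nth LO t q) by move: tq; case: (nth LO t q).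
apply: (@eq_from_nth _ set0); first by rewrite size_map szt sz.
move=> i; rewrite sz => iD; rewrite (nth_map LO) ?szt //.
apply/eqP; rewrite eqEsubset gs // andbT; apply/subsetP => y yS.
have [a ea] := (okD _ (sD i iD)).2 y yS; subst y.
rewrite mem_g; apply: gkey2.
  have ti : rl (nth LO t i) \in nth set0 s i.
    by move/subsetP: (gs i iD); apply; rewrite mem_g gmem_self.
  case/orP: (allP ul _ (sD i iD)) => [/allrlP U|/allrlP L].
    by rewrite (U _ yS) (U _ ti).
  by rewrite (negbTE (L _ yS)) (negbTE (L _ ti)).
have ar : i = p -> isX a || isR a.
  by move=> eip; rewrite eip in yS; move/allrlP: xp => /(_ a yS).
have ac : i = q -> isX a || isC a.
  by move=> eiq; rewrite eiq in yS; move/allrlP: xq => /(_ a yS).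
case/orP: cond => /andP [c1 c2].
- have ep : p = k.
    case: (ptk p hp nOp) => // e; move: tp c2; rewrite e; by case: (nth LO t k').
  have eq : q = k.
    case: (ptk q hq nOq) => // e; move: tq c2; rewrite e; by case: (nth LO t k').
  case: (i =P k) => [eik|/eqP nik].
    rewrite eik c1 /= (ar (etrans eik (esym ep))) (ac (etrans eik (esym eq))).
    by rewrite orbT.
  case: (i =P k') => [eik'|/eqP nik']; first by rewrite eik' c2.
  by rewrite othO.
- have ep : p = k.
    case: (ptk p hp nOp) => // e; move: tp c2; rewrite e; by case: (nth LO t k').
  have eq : q = k'.
    case: (ptk q hq nOq) => // e; move: tq c1; rewrite e; by case: (nth LO t k).
  case: (i =P k) => [eik|/eqP nik].
    by rewrite eik c1 /= (ar (etrans eik (esym ep))) !orbT.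
  case: (i =P k') => [eik'|/eqP nik'].
    by rewrite eik' c2 /= (ac (etrans eik' (esym eq))) !orbT.
  by rewrite othO.
Qed.

Lemma sum_le (Ds Es : seq {set {set olab}}) :
  all2 (fun A B : {set {set olab}} => A \subset B) Ds Es ->
  sumn (map (fun S : {set {set olab}} => #|S|) Ds) <= sumn (map (fun S : {set {set olab}} => #|S|) Es).
Proof.
elim: Ds Es => [|x Ds IH] [|y Es] //= /andP [xy /IH h].
by apply: leq_add => //; apply: subset_leq_card.
Qed.

Lemma add_eq_le a b c d : a + c = b + d -> a <= b -> c <= d -> a = b /\ c = d.
Proof. lia. Qed.

Lemma L4 (Ds Es : seq {set {set olab}}) :
  all2 (fun A B : {set {set olab}} => A \subset B) Ds Es -> perm_eq Ds Es -> Ds = Es.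
Proof.
move=> al p.
have : sumn (map (fun S : {set {set olab}} => #|S|) Ds) = sumn (map (fun S : {set {set olab}} => #|S|) Es).
  by apply: perm_sumn; apply: perm_map.
elim: Ds Es al {p} => [|x Ds IH] [|y Es] //= /andP [xy al] e.
have h1 := subset_leq_card xy; have h2 := sum_le al.
have [e1 e2] := add_eq_le e h1 h2.
rewrite (IH Es al e2); congr (_ :: _); apply/eqP; rewrite eqEcard xy e1 leqnn //.
Qed.

Definition NN D Ds := maximal_admissible D LRl (NR D) Ds.

Lemma NN_g D t : 1 < D -> NN D (map g t) <-> orcx_node D t.
Proof.
move=> D2; split.
  move=> [adm max].
  have st := (Adm _ D2).1 adm.
  have [t' [node' al]] := L1 D2 st.
  have adm' : admissible D LRl (NR D) (map g t') by apply/(Adm _ D2); exact: L2.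
  have p := max _ adm' (ex_intro _ (map g t') (conj (perm_refl _) al)).
  by have := L4 al p => /(inj_map g_inj) ->.
move=> node; split; first by apply/(Adm _ D2); exact: L2.
move=> C' adm' [s [ps al]].
have ps' : perm_eq C' s by rewrite perm_sym.
have st : struct D s := struct_perm ps' ((Adm _ D2).1 adm').
by have := L3 node st al => es; rewrite -es.
Qed.

Lemma NN_char D Ds : 1 < D -> NN D Ds -> exists t, Ds = map g t /\ orcx_node D t.
Proof.
move=> D2 [adm max].
have st := (Adm _ D2).1 adm.
have [t' [node' al]] := L1 D2 st.
have adm' : admissible D LRl (NR D) (map g t') by apply/(Adm _ D2); exact: L2.
have p := max _ adm' (ex_intro _ (map g t') (conj (perm_refl _) al)).
by exists t'; rewrite (L4 al p).
Qed.

Definition f (S : {set {set olab}}) : olab := odflt LO [pick b | S == g b].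
Lemma fg b : f (g b) = b.
Proof.
rewrite /f; case: pickP => [b' /eqP /g_inj -> //|no].
by have := no b; rewrite eqxx.
Qed.

Lemma ex_node D x y : 1 < D -> up x + up y = 1 -> isX x && isO y || isR x && isC y ->
  orcx_node D [:: x, y & nseq (D - 2) Lo].
Proof.
move=> D2 cu cond; split; first by rewrite /= size_nseq; lia.
split.
  by rewrite (eq_count Sigma1E) /= count_nseq /= mul0n addn0.
exists 0, 1; split => //; first by apply: leq_trans D2.
  move=> [|[|i]] // iD _ _ /=; rewrite nth_nseq; case: ifP => _; apply: memOI; by [].
case/orP: cond => /andP [c1 c2] /=; apply/orP; [left|right]; apply/andP; split.
- exact: memXI.
- exact: memOI.
- exact: memRI.
- exact: memCI.
Qed.

Definition Lp D (S : {set {set olab}}) := exists C, NN D C /\ S \in C.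

Lemma Lp_char D S : 1 < D -> Lp D S <-> exists b, S = g b.
Proof.
move=> D2; split.
  move=> [C [/(NN_char D2) [t [-> _]] /mapP [b _ ->]]]; by exists b.
move=> [b ->].
have ex : forall x y, up x + up y = 1 -> isX x && isO y || isR x && isC y ->
    (b == x) || (b == y) -> Lp D (g b).
  move=> x y h1 h2 h3; exists (map g [:: x, y & nseq (D - 2) Lo]); split.
    by apply/(NN_g _ D2); apply: ex_node.
  apply/mapP; exists b => //.
  by case/orP: h3 => /eqP ->; rewrite !inE eqxx ?orbT.
move: ex; case: b => ex.
- by apply: (ex Lx LO); rewrite // !eq_olabE.
- by apply: (ex LR Lc); rewrite // !eq_olabE.
- by apply: (ex Lr LC); rewrite // !eq_olabE.
- by apply: (ex LX Lo); rewrite // !eq_olabE.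
- by apply: (ex LX Lo); rewrite // !eq_olabE.
- by apply: (ex Lr LC); rewrite // !eq_olabE.
- by apply: (ex LR Lc); rewrite // !eq_olabE.
- by apply: (ex Lx LO); rewrite // !eq_olabE.
Qed.

Lemma edge_check b1 b2 : has (fun a => gmem b1 a && gmem b2 (ncn a)) olabs = pairb b1 b2.
Proof. by case: b1; case: b2. Qed.

Lemma in_g y b : y \in g b -> exists a, y = rl a /\ gmem b a.
Proof. by move=> /imsetP [a]; rewrite inE => ha ->; exists a. Qed.

Theorem mainTheorem18 (Delta : nat) :
  3 <= Delta ->
  iso_problem (REbar Delta (RE Delta (Pi_orcx Delta))) (Pi_orcx Delta).
Proof.
move=> D3; have D2 : 1 < Delta by exact: (leq_trans _ D3).
exists f, g.
have LpE : forall S, plab (REbar Delta (RE Delta (Pi_orcx Delta))) S <-> exists b, S = g b.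
  by move=> S; exact: (Lp_char S D2).
have gf : forall S, plab (REbar Delta (RE Delta (Pi_orcx Delta))) S -> g (f S) = S.
  by move=> S /LpE [b ->]; rewrite fg.
split; first by [].
split; first by move=> b _; apply/LpE; exists b.
split; first exact: gf.
split; first by move=> b _; rewrite fg.
split; first by move=> s ns a aS; exists s.
split; first by move=> s [_ [ov _]] a aS; exact: ov.
split; first by [].
split; first by [].
split.
  move=> s Hs.
  have es : s = map g (map f s).
    by rewrite -map_comp; apply/esym/map_id_in => x xs; apply: gf; apply: Hs.
  change (NN Delta s <-> orcx_node Delta (map f s)); rewrite {1}es.
  exact: NN_g.
move=> s Hs; split.
- move=> [sz [ov [t [ch E]]]].
  case: s sz Hs ov ch => [|S1 [|S2 [|? ?]]] // _ Hs ov ch.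
  case: t ch E => [|x [|y [|? ?]]]; rewrite /choice_of /= ?andbF // => /and3P [xS yS _] E.
  have [b1 e1] := (LpE S1).1 (Hs _ (mem_head _ _)).
  have [b2 e2] : exists b, S2 = g b.
    by apply: (LpE S2).1; apply: Hs; rewrite !inE eqxx orbT.
  subst S1 S2.
  have [a1 [ex h1]] := in_g xS; have [a2 [ey h2]] := in_g yS; subst x y.
  have e := (ER_pair a1 a2).1 E.
  exists (f (g b1)), (f (g b2)); split => //; rewrite !fg pairE -edge_check.
  by apply/hasP; exists a1; [exact: mem_olabs | rewrite h1 -e h2].
- move=> [a [b [es p]]].
  case: s Hs es => [|S1 [|S2 [|? ?]]] // Hs [ea eb].
  have [b1 e1] := (LpE S1).1 (Hs _ (mem_head _ _)).
  have [b2 e2] : exists b, S2 = g b.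
    by apply: (LpE S2).1; apply: Hs; rewrite !inE eqxx orbT.
  subst S1 S2; rewrite !fg in ea eb; subst a b.
  rewrite pairE -edge_check in p; case/hasP: p => a1 _ /andP [h1 h2].
  split => //; split; first by move=> S SS; apply: Hs.
  exists [:: rl a1; rl (ncn a1)]; split; first by rewrite /choice_of /= !mem_g h1 h2.
  exact: ER_rl.
Qed.
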